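(* Let $a,b,d<0$ be fixed real numbers. Then there exists $c^*\in\mathbb{R}$ such that for every real $c>c^*$, every polynomial $W_n(z)$ ($n\ge0$) of the normalised sequence defined below is real-rooted.
   Context: Put $A(z)=az+b$, $B(z)=cz+d$ with $c\in\mathbb{R}$, $c\ne0$. The normalised sequence $\{W_n(z)\}_{n\ge0}$ is defined by $W_0(z)=1$, $W_1(z)=z$ and $W_n(z)=A(z)W_{n-1}(z)+B(z)W_{n-2}(z)$ for $n\ge2$. Real-rooted means all zeros are real. *)

(* Defs.v *)
From Stdlib Require Import Reals List.
Open Scope R_scope.

(* The normalised sequence W_n(z), with A(z) = a z + b, B(z) = c z + d:
   W_0 = 1, W_1 = z, W_n = A W_{n-1} + B W_{n-2}  (n >= 2),
   represented as polynomial functions R -> R. *)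
Fixpoint W (a b c d : R) (n : nat) (z : R) : R :=
  match n with
  | O => 1
  | S m =>
      match m with
      | O => z
      | S k => (a * z + b) * W a b c d m z + (c * z + d) * W a b c d k z
      end
  end.

Definition prodlin (rs : list R) (z : R) : R :=
  fold_right (fun r acc => (z - r) * acc) 1 rs.

(* A (nonzero) real polynomial is real-rooted iff all its (complex) zeros
   are real, i.e. iff it factors as k * prod (z - r_i) with k <> 0 and all
   r_i real. *)
Definition real_rooted (f : R -> R) : Prop :=
  exists (k : R) (rs : list R), k <> 0 /\ forall z : R, f z = k * prodlin rs z.

(* Main.v *)
Require Import Defs.
From Stdlib Require Import Reals List Lra Lia Psatz Ranalysis5.
Open Scope R_scope.

Lemma W_SS a b c d k z : W a b c d (S (S k)) z =
  (a*z+b) * W a b c d (S k) z + (c*z+d) * W a b c d k z.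
Proof. reflexivity. Qed.

Lemma sin_rec t x : sin (x + t) = 2 * cos t * sin x - sin (x - t).
Proof. rewrite sin_plus, sin_minus. ring. Qed.

Lemma cheb a b c d z s th : 0 < s -> s*s = -(c*z+d) -> a*z+b = 2*cos th*s ->
  forall m, W a b c d m z * sin th * s =
     s^m * (s * sin (INR (S m) * th) + (z - (a*z+b)) * sin (INR m * th)).
Proof.
  intros Hs HB HA.
  assert (H: forall m, W a b c d m z * sin th * s =
     s^m * (s * sin (INR (S m) * th) + (z - (a*z+b)) * sin (INR m * th)) /\
     W a b c d (S m) z * sin th * s =
     s^(S m) * (s * sin (INR (S (S m)) * th) + (z - (a*z+b)) * sin (INR (S m) * th))).
  { induction m as [|m [IH1 IH2]].
    - simpl. rewrite !Rmult_1_l, Rmult_0_l, sin_0. split; [ring|].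
      replace ((1+1)*th) with (th+th) by ring. rewrite sin_plus. rewrite HA. ring.
    - split; [exact IH2|].
      rewrite W_SS.
      replace (INR (S (S (S m))) * th) with (INR (S (S m)) * th + th) by (rewrite !S_INR; ring).
      rewrite sin_rec.
      replace (INR (S (S m)) * th - th) with (INR (S m) * th) by (rewrite !S_INR; ring).
      replace ((a * z + b) * W a b c d (S m) z + (c * z + d) * W a b c d m z) with
        ((a * z + b) * W a b c d (S m) z + - (s*s) * W a b c d m z) by (rewrite HB; ring).
      replace (((a * z + b) * W a b c d (S m) z + - (s * s) * W a b c d m z) * sin th * s)
       with ((a * z + b) * (W a b c d (S m) z * sin th * s) - (s * s) * (W a b c d m z * sin th * s)) by ring.
      rewrite IH1, IH2.
      assert (Hr : sin (INR (S (S m)) * th) = 2 * cos th * sin (INR (S m) * th) - sin (INR m * th)).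
      { replace (INR (S (S m)) * th) with (INR (S m) * th + th) by (rewrite !S_INR; ring).
        rewrite sin_rec. f_equal. f_equal. rewrite !S_INR; ring. }
      rewrite Hr, HA. simpl. ring. }
  intro m; apply H.
Qed.


Lemma sinkpi k : sin (INR k * PI) = 0 /\ cos (INR k * PI) = (-1)^k.
Proof.
  induction k as [|k [IH1 IH2]].
  - simpl. rewrite Rmult_0_l, sin_0, cos_0. split; reflexivity.
  - rewrite S_INR, Rmult_plus_distr_r, Rmult_1_l, sin_plus, cos_plus, IH1, IH2, sin_PI, cos_PI.
    simpl. split; ring.
Qed.

Lemma cheb_val a b c d z s n k : 0 < s -> s*s = -(c*z+d) ->
  a*z+b = 2*cos (INR k * PI / INR n)*s -> (0 < k < n)%nat ->
  W a b c d n z = s^n * (-1)^k.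
Proof.
  intros Hs HB HA Hk.
  set (th := INR k * PI / INR n) in *.
  assert (Hn : 0 < INR n) by (apply lt_0_INR; lia).
  assert (Hkn : INR k < INR n) by (apply lt_INR; lia).
  assert (Hk0 : 0 < INR k) by (apply lt_0_INR; lia).
  assert (Hsin : 0 < sin th).
  { apply sin_gt_0; unfold th.
    - apply Rdiv_lt_0_compat; [apply Rmult_lt_0_compat; [lra|apply PI_RGT_0]|lra].
    - apply (Rmult_lt_reg_r (INR n)); [lra|]. unfold Rdiv. rewrite Rmult_assoc, Rinv_l by lra.
      assert (0 < PI) by apply PI_RGT_0. nra. }
  pose proof (cheb a b c d z s th Hs HB HA n) as H.
  assert (E1 : INR n * th = INR k * PI) by (unfold th; field; lra).
  assert (E2 : INR (S n) * th = INR k * PI + th) by (rewrite S_INR, Rmult_plus_distr_r, E1; ring).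
  rewrite E1, E2, sin_plus in H. destruct (sinkpi k) as [S0 C0]. rewrite S0, C0 in H.
  apply (Rmult_eq_reg_r (sin th * s)); [|nra].
  rewrite <- Rmult_assoc, H. ring.
Qed.

Lemma W_cont a b c d n : continuity (W a b c d n).
Proof.
  assert (H: forall n, continuity (W a b c d n) /\ continuity (W a b c d (S n))).
  { induction n0 as [|n0 [IH1 IH2]].
    - split; [apply continuity_const; intros x y; reflexivity|]. apply derivable_continuous, derivable_id.
    - split; [exact IH2|].
      change (continuity (fun z => (a*z+b) * W a b c d (S n0) z + (c*z+d) * W a b c d n0 z)).
      apply continuity_plus; apply continuity_mult; try assumption;
       apply derivable_continuous; reg. }
  apply H.
Qed.

Lemma ivt_root f x y : (forall t, x <= t <= y -> continuity_pt f t) -> x < y -> f x * f y < 0 ->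
  exists r, x < r < y /\ f r = 0.
Proof.
  intros Hc Hxy Hs.
  destruct (Rlt_dec (f x) 0) as [Hx|Hx].
  - assert (Hy : 0 < f y) by nra.
    destruct (IVT_interv f x y Hc Hxy Hx Hy) as [r [[H1 H2] H3]].
    exists r; split; [split|exact H3].
    + destruct H1 as [H1|H1]; [exact H1| subst; lra].
    + destruct H2 as [H2|H2]; [exact H2| subst; lra].
  - assert (Hx' : 0 < f x) by (destruct (Rle_lt_or_eq_dec 0 (f x)); [lra|assumption|subst; rewrite <- e in Hs; lra]).
    assert (Hy : f y < 0) by nra.
    assert (Hc' : forall t, x <= t <= y -> continuity_pt (- f)%F t) by (intros; apply continuity_pt_opp; auto).
    destruct (IVT_interv (- f)%F x y Hc' Hxy) as [r [[H1 H2] H3]]; unfold opp_fct; try lra.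
    unfold opp_fct in H3.
    exists r; split; [split|lra].
    + destruct H1 as [H1|H1]; [exact H1| subst; lra].
    + destruct H2 as [H2|H2]; [exact H2| subst; lra].
Qed.


Lemma eps_sign a b c d e : 0 < (a*e+b)*e + (c*e+d) ->
  (a*e+b)^2*e + (c*e+d)*((a*e+b)+e) < 0 ->  a*e+b < 0 -> 0 < c*e+d ->
  forall m, 0 < (-1)^(S (S m)) * W a b c d (S (S m)) e.
Proof.
  intros H2 H3 HA HB.
  assert (H: forall m, 0 < (-1)^(S (S m)) * W a b c d (S (S m)) e /\
                       0 < (-1)^(S (S (S m))) * W a b c d (S (S (S m))) e).
  { induction m as [|m [IH1 IH2]].
    - rewrite !W_SS. simpl. split; nra.
    - split; [exact IH2|].
      rewrite W_SS. 
      replace ((-1) ^ S (S (S (S m))) * ((a * e + b) * W a b c d (S (S (S m))) e + (c * e + d) * W a b c d (S (S m)) e))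
        with (- (a*e+b) * ((-1) ^ S (S (S m)) * W a b c d (S (S (S m))) e) + (c*e+d) * ((-1) ^ S (S m) * W a b c d (S (S m)) e)) by (simpl; ring).
      nra. }
  intro m; apply H.
Qed.

Lemma ang_bounds j n : (j <= n)%nat -> (0 < n)%nat ->
  0 <= INR j * PI / INR n <= PI.
Proof.
  intros Hj Hn.
  assert (0 < INR n) by (apply lt_0_INR; lia).
  assert (INR j <= INR n) by (apply le_INR; lia).
  assert (0 <= INR j) by apply pos_INR.
  assert (0 < PI) by apply PI_RGT_0.
  split.
  - apply Rmult_le_pos; [nra| left; apply Rinv_0_lt_compat; lra].
  - apply (Rmult_le_reg_r (INR n)); [lra|]. unfold Rdiv. rewrite Rmult_assoc, Rinv_l by lra. nra.
Qed.

Lemma ang_lt j k n : (j < k)%nat -> (0 < n)%nat -> INR j * PI / INR n < INR k * PI / INR n.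
Proof.
  intros Hjk Hn.
  assert (0 < INR n) by (apply lt_0_INR; lia).
  assert (INR j < INR k) by (apply lt_INR; lia).
  assert (0 < PI) by apply PI_RGT_0.
  unfold Rdiv. apply Rmult_lt_compat_r; [apply Rinv_0_lt_compat; lra| nra].
Qed.

Lemma cos_ang_lt j k n : (j < k)%nat -> (k <= n)%nat -> cos (INR k * PI / INR n) < cos (INR j * PI / INR n).
Proof.
  intros. assert (0 < n)%nat by lia.
  destruct (ang_bounds j n) as [? ?]; try lia. destruct (ang_bounds k n) as [? ?]; try lia.
  apply cos_decreasing_1; auto. apply ang_lt; auto.
Qed.

Lemma cos_ang_bounds j n : (0 < j < n)%nat -> -1 < cos (INR j * PI / INR n) < 1.
Proof.
  intros. split.
  - replace (-1) with (cos (INR n * PI / INR n)).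
    + apply cos_ang_lt; lia.
    + replace (INR n * PI / INR n) with PI. apply cos_PI.
      field. apply not_0_INR; lia.
  - replace 1 with (cos (INR 0 * PI / INR n)).
    + apply cos_ang_lt; lia.
    + simpl. unfold Rdiv. rewrite !Rmult_0_l. apply cos_0.
Qed.

Lemma sqrt_cont_pt c d t : 0 < -(c*t+d) -> continuity_pt (fun t => sqrt (-(c*t+d))) t.
Proof.
  intros H.
  apply (continuity_pt_comp (fun t => -(c*t+d)) sqrt).
  - apply derivable_continuous_pt. reg.
  - apply continuity_pt_sqrt. lra.
Qed.

Lemma chain a b c d n L Rr : (2 <= n)%nat -> 0 < c -> L < Rr -> c*Rr+d < 0 ->
  2 * sqrt (-(c*L+d)) <= a*L+b -> a*Rr+b <= -2 * sqrt (-(c*Rr+d)) ->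
  forall j, (1 <= j <= n-1)%nat -> exists z rs, L < z < Rr /\
     a*z+b = 2 * cos (INR j * PI / INR n) * sqrt (-(c*z+d)) /\
     length rs = (j-1)%nat /\ NoDup rs /\ (forall r, In r rs -> r < z /\ W a b c d n r = 0).
Proof.
  intros Hn Hc HLR HR HAL HAR.
  assert (HBneg : forall t, t <= Rr -> 0 < -(c*t+d)) by (intros; nra).
  assert (Hsl : 0 < sqrt (-(c*L+d))) by (apply sqrt_lt_R0; apply HBneg; lra).
  assert (Hsr : 0 < sqrt (-(c*Rr+d))) by (apply sqrt_lt_R0; apply HBneg; lra).
  assert (Step : forall z0 g, L <= z0 < Rr -> -1 < g ->  2 * g * sqrt (-(c*z0+d)) < a*z0+b ->
            exists z, z0 < z < Rr /\ a*z+b = 2 * g * sqrt (-(c*z+d))).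
  { intros z0 g Hz0 Hg Hf0.
    destruct (ivt_root (fun t => 2 * g * sqrt (-(c*t+d)) - (a*t+b)) z0 Rr) as [z [Hz Hfz]].
    - intros t Ht. apply continuity_pt_minus.
      + apply continuity_pt_mult. apply continuity_pt_const; intros x y; reflexivity.
        apply sqrt_cont_pt. apply HBneg; lra.
      + apply derivable_continuous_pt; reg.
    - lra.
    - assert (0 < 2 * g * sqrt (- (c * Rr + d)) - (a * Rr + b)) by nra. nra.
    - exists z. split; [exact Hz| lra]. }
  induction j as [|j IH]; intros Hj; [lia|].
  destruct (Nat.eq_dec j 0) as [Hj0|Hj0].
  - subst j. destruct (cos_ang_bounds 1 n) as [Hg1 Hg2]; [lia|].
    destruct (Step L (cos (INR 1 * PI / INR n))) as [z [Hz Hfz]]; try lra.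
    { nra. }
    exists z, nil. split; [lra|]. split; [exact Hfz|]. split; [reflexivity|]. split; [constructor|].
    intros r [].
  - destruct IH as [z0 [rs [Hz0 [Hf0 [Hlen [Hnd Hrs]]]]]]; [lia|].
    destruct (cos_ang_bounds (S j) n) as [Hg1 Hg2]; [lia|].
    assert (Hlt : cos (INR (S j) * PI / INR n) < cos (INR j * PI / INR n)) by (apply cos_ang_lt; lia).
    assert (Hs0 : 0 < sqrt (-(c*z0+d))) by (apply sqrt_lt_R0; apply HBneg; lra).
    destruct (Step z0 (cos (INR (S j) * PI / INR n))) as [z [Hz Hfz]]; try lra.
    { rewrite Hf0. nra. }
    assert (Hs : 0 < sqrt (-(c*z+d))) by (apply sqrt_lt_R0; apply HBneg; lra).
    assert (W0 : W a b c d n z0 = sqrt (-(c*z0+d)) ^ n * (-1)^j).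
    { apply cheb_val; auto; try lia. apply sqrt_sqrt. pose proof (HBneg z0). lra. }
    assert (W1 : W a b c d n z = sqrt (-(c*z+d)) ^ n * (-1)^(S j)).
    { apply cheb_val; auto; try lia. apply sqrt_sqrt. pose proof (HBneg z). lra. }
    destruct (ivt_root (W a b c d n) z0 z) as [r [Hr Hwr]].
    + intros; apply W_cont.
    + lra.
    + rewrite W0, W1. simpl.
      pose proof (pow_lt _ n Hs0). pose proof (pow_lt _ n Hs).
      assert (0 < (-1)^j * (-1)^j) by (rewrite <- Rpow_mult_distr; replace (-1 * -1) with 1 by ring; rewrite pow1; lra).
      replace (sqrt (- (c * z0 + d)) ^ n * (-1) ^ j * (sqrt (- (c * z + d)) ^ n * (-1 * (-1) ^ j)))
        with (- ((sqrt (- (c * z0 + d)) ^ n * sqrt (- (c * z + d)) ^ n) * ((-1)^j * (-1)^j))) by ring.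
      assert (0 < sqrt (- (c * z0 + d)) ^ n * sqrt (- (c * z + d)) ^ n) by nra. nra.
    + exists z, (r :: rs). split; [lra|]. split; [exact Hfz|]. split; [simpl; lia|]. split.
      * constructor; [|exact Hnd]. intros Hin. destruct (Hrs r Hin). lra.
      * intros r' [<-|Hin]; [split; [lra|exact Hwr]|]. destruct (Hrs r' Hin). split; [lra|auto].
Qed.


Lemma consts a b d : a < 0 -> b < 0 -> d < 0 ->
  exists cstar, forall c, cstar < c ->
    let e := -b/2 in let Rr := (-d - (-b/4)*(-b/4))/c in let L := -8*c/(a*a) in
    0 < c /\ L < Rr /\ Rr < e /\ c*Rr+d < 0 /\
    2 * sqrt (-(c*L+d)) <= a*L+b /\ a*Rr+b <= -2 * sqrt (-(c*Rr+d)) /\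
    0 < (a*e+b)*e + (c*e+d) /\ (a*e+b)^2*e + (c*e+d)*((a*e+b)+e) < 0 /\
    a*e+b < 0 /\ 0 < c*e+d.
Proof.
  intros ha hb hd.
  set (p := -2*d/(-b)).
  assert (Hp : p * (-b) = -2*d) by (unfold p; field; lra).
  assert (Hp0 : 0 < p) by (unfold p; apply Rdiv_lt_0_compat; lra).
  exists (a*b + (-a)*(1-d) + p + (-b)*(2-a)*(2-a)/2 + 1).
  intros c Hc; cbv zeta.
  set (e := -b/2). set (Rr := (-d - (-b/4)*(-b/4))/c). set (L := -8*c/(a*a)).
  assert (H1 : 0 <= a*b) by nra.
  assert (H2 : 0 <= (-a)*(1-d)) by nra.
  assert (H3 : 0 <= (-b)*(2-a)*(2-a)/2) by (assert (0 <= (2-a)*(2-a)) by nra; nra).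
  assert (Hc1 : a*b < c) by lra.
  assert (Hc2 : (-a)*(1-d) < c) by lra.
  assert (Hc3 : p < c) by lra.
  assert (Hc4 : (-b)*(2-a)*(2-a)/2 < c) by lra.
  assert (Hc0 : 0 < c) by lra.
  set (eta := (-b/4)*(-b/4)).
  assert (Heta : 0 < eta) by (unfold eta; nra).
  assert (HRr : c * Rr = -d - eta). { unfold Rr, eta. clear -Hc0. field. lra. }
  assert (HL : c * L * (a*a) = -8*c*c) by (unfold L; field; lra).
  assert (HLa : a * L * (-a) = 8 * c) by (unfold L; field; lra).
  assert (Ha2 : 0 < a*a) by nra.
  assert (Hcd : -2*d < c*(-b)) by nra.
  repeat split.
  - exact Hc0.
  -
    apply (Rmult_lt_reg_l c); [lra|].
    apply (Rmult_lt_reg_r (a*a)); [lra|].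
    rewrite HL, HRr. unfold eta. nra.
  - apply (Rmult_lt_reg_l c); [lra|]. rewrite HRr. unfold e, eta. nra.
  - rewrite HRr. lra.
  -
    assert (HA : a*L+b = 8*c/(-a) + b) by (unfold L; field; lra).
    assert (HB : -(c*L+d) = 8*c*c/(a*a) - d) by (unfold L; field; lra).
    set (q := c/(-a)).
    assert (Hq : q * (-a) = c) by (unfold q; field; lra).
    assert (Hqb : -b <= q) by nra.
    assert (Hqd : 1 - d <= q) by nra.
    replace (8*c/(-a)) with (8*q) in HA by (unfold q; field; lra).
    replace (8*c*c/(a*a)) with (8*q*q) in HB by (unfold q; field; lra).
    rewrite HA, HB.
    assert (Hpos : 0 <= 8*q+b) by lra.
    rewrite <- (sqrt_square (8*q+b)) by lra.
    replace (2 * sqrt (8*q*q - d)) with (sqrt (4 * (8*q*q - d))).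
    + apply sqrt_le_1_alt. nra.
    + rewrite sqrt_mult by nra. replace 4 with (2*2) by ring. rewrite sqrt_square; lra.
  -
    replace (-(c*Rr+d)) with eta by lra. unfold eta. rewrite sqrt_square by lra.
    apply (Rmult_le_reg_l c); [lra|].
    replace (c * (a*Rr+b)) with (a * (c*Rr) + c*b) by ring. rewrite HRr. unfold eta.
    assert (0 <= (-a) * (-d)) by nra. nra.
  - unfold e. nra.
  - unfold e.
    set (A := a * (-b/2) + b).
    assert (HA0 : A < 0) by (unfold A; nra).
    assert (HA2 : A*A = (-b)*(-b)*(2-a)*(2-a)/4) by (unfold A; field).
    assert (HB : (-b)*(2-a)*(2-a)/2 * (-b) < c * (-b)) by nra.
    assert (HBA : A*A < c*(-b/2) + d) by nra.
    assert (HAe : A + -b/2 <= -b/2 * (a-1) ) by (unfold A; nra).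
    nra.
  - unfold e. nra.
  - unfold e. nra.
Qed.

Lemma final_roots a b c d n L Rr e : (2 <= n)%nat -> 0 < c -> L < Rr -> Rr < e -> c*Rr+d < 0 ->
  2 * sqrt (-(c*L+d)) <= a*L+b -> a*Rr+b <= -2 * sqrt (-(c*Rr+d)) ->
  0 < (-1)^n * W a b c d n e ->
  exists rs, length rs = (n-1)%nat /\ NoDup rs /\ (forall r, In r rs -> W a b c d n r = 0).
Proof.
  intros Hn Hc HLR HRe HR HAL HAR He.
  destruct (chain a b c d n L Rr Hn Hc HLR HR HAL HAR (n-1)) as [z [rs [Hz [Hfz [Hlen [Hnd Hrs]]]]]]; [lia|].
  assert (Hs : 0 < sqrt (-(c*z+d))) by (apply sqrt_lt_R0; nra).
  assert (Wz : W a b c d n z = sqrt (-(c*z+d)) ^ n * (-1)^(n-1)).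
  { apply cheb_val; auto; try lia. apply sqrt_sqrt. nra. }
  destruct (ivt_root (W a b c d n) z e) as [r [Hr Hwr]].
  - intros; apply W_cont.
  - lra.
  - rewrite Wz. destruct n as [|m]; [lia|].
    replace (S m - 1)%nat with m in * by lia.
    change ((-1)^(S m)) with (-1 * (-1)^m) in He.
    pose proof (pow_lt _ (S m) Hs).
    replace (sqrt (- (c * z + d)) ^ S m * (-1) ^ m * W a b c d (S m) e)
      with (- (sqrt (- (c * z + d)) ^ S m * (-1 * (-1) ^ m * W a b c d (S m) e))) by ring.
    nra.
  - exists (r :: rs). split; [simpl; lia|]. split.
    + constructor; [|exact Hnd]. intros Hin. destruct (Hrs r Hin). lra.
    + intros r' [<-|Hin]; [exact Hwr|]. apply Hrs; exact Hin.
Qed.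

Lemma roots_exist a b d : a < 0 -> b < 0 -> d < 0 ->
  exists cstar, forall c, cstar < c -> forall n, (1 <= n)%nat ->
    exists rs, length rs = (n-1)%nat /\ NoDup rs /\ (forall r, In r rs -> W a b c d n r = 0).
Proof.
  intros ha hb hd.
  destruct (consts a b d ha hb hd) as [cstar Hcs].
  exists cstar. intros c Hc n Hn.
  pose proof (Hcs c Hc) as H. cbv zeta in H.
  destruct H as [Hc0 [HLR [HRe [HR [HAL [HAR [E2 [E3 [EA EB]]]]]]]]].
  destruct (Nat.eq_dec n 1) as [->|Hn1].
  - exists nil. split; [reflexivity|]. split; [constructor|]. intros r [].
  - apply (final_roots a b c d n (-8*c/(a*a)) ((-d - (-b/4)*(-b/4))/c) (-b/2)); auto; try lia.
    destruct n as [|[|m]]; try lia.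
    apply (eps_sign a b c d); assumption.
Qed.

From mathcomp Require Import all_boot all_algebra.
From mathcomp Require Import Rstruct zify ring.
Import GRing.Theory.
Open Scope ring_scope.

Lemma prodlinE (rs : seq R) (z : R) : prodlin rs z = (\prod_(r <- rs) ('X - r%:P)).[z].
Proof.
  elim: rs => [|r rs IH]; first by rewrite big_nil hornerE.
  rewrite big_cons hornerM -IH /=. by rewrite !hornerE.
Qed.

Lemma rr_poly (p : {poly R}) (rs : seq R) : size p = (size rs).+2 -> uniq rs -> all (root p) rs ->
  real_rooted (fun z => p.[z]).
Proof.
  move=> Hs Hu Hr.
  have Hu' : uniq_roots rs by rewrite uniq_rootsE.
  have [q Hq] := uniq_roots_prod_XsubC Hr Hu'.
  have Hp0 : p != 0 by rewrite -size_poly_gt0 Hs.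
  have Hq0 : q != 0 by apply: contraNneq Hp0 => q0; rewrite Hq q0 mul0r.
  have HP0 : \prod_(z <- rs) ('X - z%:P) != 0 :> {poly R}.
    by rewrite -size_poly_gt0 size_prod_XsubC.
  have Hsq : size q = 2%N.
    move: Hs; rewrite Hq size_mul // size_prod_XsubC. rewrite addnS /= => H. by apply/eqP; rewrite -(eqn_add2r (size rs)) H addnC addn2.
  set q1 := q`_1. set q0 := q`_0.
  have Hq1 : q1 != 0.
    have : lead_coef q != 0 by rewrite lead_coef_eq0.
    by rewrite lead_coefE Hsq.
  have Hqz : forall z, q.[z] = q1 * z + q0.
    move=> z. rewrite (@horner_coef_wide _ 2) ?Hsq // !big_ord_recr big_ord0 /=.
    rewrite expr0 expr1 add0r mulr1 addrC. done.
  exists q1, ((- q0 / q1) :: rs). split; first by apply/eqP.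
  move=> z. rewrite /= prodlinE Hq hornerM Hqz.
  move: (_.[z]) => P. rewrite !RmultE RminusE. field. done.
Qed.
Fixpoint Wp (a b c d : R) (n : nat) : {poly R} :=
  match n with
  | O => 1
  | S m => match m with
           | O => 'X
           | S k => (a *: 'X + b%:P) * Wp a b c d m + (c *: 'X + d%:P) * Wp a b c d k
           end
  end.

Lemma Wp_horner a b c d n z : (Wp a b c d n).[z] = W a b c d n z.
Proof.
  move: n; suff H : forall n, (Wp a b c d n).[z] = W a b c d n z /\ (Wp a b c d n.+1).[z] = W a b c d n.+1 z.
    by move=> n; case: (H n).
    elim=> [|n [IH1 IH2]]; first by rewrite /= !hornerE.
    split=> //. rewrite [Wp _ _ _ _ _]/= hornerD !hornerM IH1 IH2 !hornerE. done.
Qed.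

Lemma Wp_size a b c d : a != 0 -> forall n, size (Wp a b c d n) = n.+1 /\ lead_coef (Wp a b c d n) = a ^+ n.-1.
Proof.
  move=> Ha.
  suff H : forall n, (size (Wp a b c d n) = n.+1 /\ lead_coef (Wp a b c d n) = a ^+ n.-1) /\
                     (size (Wp a b c d n.+1) = n.+2 /\ lead_coef (Wp a b c d n.+1) = a ^+ n).
    by move=> n; case: (H n).
  elim=> [|n [[IH1 IH1'] [IH2 IH2']]].
    split; first by rewrite /= size_poly1 lead_coef1.
    by rewrite /= size_polyX lead_coefX.
  split=> //.
  have HA : size (a *: 'X + b%:P) = 2%N by rewrite -mul_polyC size_MXaddC polyC_eq0 (negbTE Ha) /= size_polyC Ha.
  have HAl : lead_coef (a *: 'X + b%:P) = a.
    rewrite -mul_polyC lead_coefDl ?lead_coefMX ?lead_coefC // size_mulX ?polyC_eq0 // !size_polyC Ha. by case: (b != 0).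
  have HA0 : a *: 'X + b%:P != 0 by rewrite -size_poly_gt0 HA.
  have HW0 : Wp a b c d n.+1 != 0 by rewrite -size_poly_gt0 IH2.
  have S1 : size ((a *: 'X + b%:P) * Wp a b c d n.+1) = n.+3 by rewrite size_mul // HA IH2.
  have S2 : (size ((c *: 'X + d%:P) * Wp a b c d n)%R < n.+3)%N.
    apply: (leq_ltn_trans (size_polyMleq _ _)). rewrite IH1.
    have : (size (c *: 'X + d%:P)%R <= 2)%N.
      rewrite -mul_polyC. apply: (leq_trans (size_polyD _ _)). rewrite geq_max size_polyC.
      apply/andP; split; last by case: (d != 0).
      apply: (leq_trans (size_polyMleq _ _)). rewrite size_polyX size_polyC. by case: (c != 0).
    lia.
  rewrite [Wp _ _ _ _ n.+2]/=.
  split.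
    by rewrite size_addl S1.
  rewrite lead_coefDl; last by rewrite S1.
  by rewrite lead_coefM HAl IH2' -exprS.
Qed.

Lemma in_In (x : R) (s : seq R) : x \in s -> In x s.
Proof.
  elim: s => [|y s IH] //. rewrite in_cons => /orP [/eqP ->|H]; [by left|right; exact: IH].
Qed.

Lemma NoDup_uniq (s : seq R) : NoDup s -> uniq s.
Proof.
  elim: s => [|y s IH] // H. inversion H; subst.
  rewrite /= IH // andbT. apply/negP => Hin. apply: H2. exact: in_In.
Qed.

Lemma W_real_rooted a b c d n (rs : seq R) : a != 0 -> (1 <= n)%N -> length rs = (n-1)%N -> NoDup rs ->
  (forall r, In r rs -> W a b c d n r = 0) -> real_rooted (W a b c d n).
Proof.
  move=> Ha Hn Hlen Hnd Hr.
  have [Hs _] := Wp_size a b c d Ha n.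
  have : real_rooted (fun z => (Wp a b c d n).[z]).
    apply: (@rr_poly _ rs).
    - rewrite Hs. have -> : size rs = length rs by []. rewrite Hlen. lia.
    - exact: NoDup_uniq.
    - apply/allP => r Hin. rewrite /root Wp_horner. apply/eqP. apply: Hr. exact: in_In.
  move=> [k [rs' [Hk Hf]]]. exists k, rs'. split=> // z. rewrite -Hf Wp_horner. done.
Qed.

Open Scope R_scope.

Theorem theorem5p1 (a b d : R) (ha : a < 0) (hb : b < 0) (hd : d < 0) :
  exists cstar : R, forall c : R, cstar < c -> c <> 0 ->
    forall n : nat, real_rooted (W a b c d n).
Proof.
  destruct (roots_exist a b d ha hb hd) as [cstar Hcs].
  exists cstar. intros c Hc _ n.
  destruct n as [|n].
  - exists 1, nil. split; [exact R1_neq_R0|]. intros z. simpl. symmetry. apply Rmult_1_r.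
  - destruct (Hcs c Hc (S n)) as [rs [Hlen [Hnd Hr]]]; [lia|].
    apply (W_real_rooted a b c d (S n) rs); auto.
    apply/eqP. apply Rlt_not_eq. exact ha.
Qed.
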